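(* Let $r\ge 10$ be an even integer, let $k\ge 1$, and let $Q\subseteq\mathrm{VE}(G_k)$ be such that $\mu_1\notin\mathrm{VE}(G_{2r+1}(\mu_2))$ for all distinct $\mu_1,\mu_2\in Q$. Then for every $\mu\in\mathrm{VE}(G_k)$, \[ \bigl|\{\mu_1\in Q:\mu\in\mathrm{VE}(G_{3r+1}(\mu_1))\}\bigr|\le 16. \]
   Context: The grid $G_k$ has vertex set $\{1,\dots,k\}^2$, with $(i_1,j_1)$ and $(i_2,j_2)$ adjacent iff $|i_1-i_2|+|j_1-j_2|=1$. For a graph $H$, $\mathrm{VE}(H):=V(H)\cup E(H)$. For a vertex $v=(i,j)$ of $G_k$ and integer $s\ge 0$, $B_s(v):=(\{i-s,\dots,i+s\}\times\{j-s,\dots,j+s\})\cap V(G_k)$; for an edge $vw$ of $G_k$, $B_s(vw):=B_s(v)\cup B_s(w)$; and $G_s(\mu):=G_k[B_s(\mu)]$ is the induced subgraph, for $\mu\in\mathrm{VE}(G_k)$. *)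

(* Defs.v *)
From mathcomp Require Import all_boot.
Set Implicit Arguments. Unset Strict Implicit. Unset Printing Implicit Defensive.

(* Vertices of the grid G_k: the pair (i, j) : 'I_k * 'I_k stands for the
   vertex (i+1, j+1) of {1..k}^2 (a translation, irrelevant for all notions below). *)
Definition gvtx (k : nat) : finType := ('I_k * 'I_k)%type.

Definition ndist (a b : nat) : nat := (a - b) + (b - a).

Definition gadj k (v w : gvtx k) : bool :=
  ndist v.1 w.1 + ndist v.2 w.2 == 1.

(* Candidate elements of VE(G_k): a vertex (inl) or a 2-set of vertices (inr). *)
Definition gitem (k : nat) : finType := (gvtx k + {set gvtx k})%type.

Definition is_gedge k (e : {set gvtx k}) : bool :=
  [exists v, exists w, gadj v w && (e == [set v; w])].

Definition inVE k (x : gitem k) : bool :=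
  match x with inl _ => true | inr e => is_gedge e end.

Definition ballv k (s : nat) (v : gvtx k) : {set gvtx k} :=
  [set u : gvtx k | (ndist u.1 v.1 <= s) && (ndist u.2 v.2 <= s)].

Definition ball k (s : nat) (mu : gitem k) : {set gvtx k} :=
  match mu with
  | inl v => ballv s v
  | inr e => \bigcup_(v in e) ballv s v
  end.

(* x ∈ VE(G_s(mu)), where G_s(mu) = G_k[B_s(mu)] is the induced subgraph *)
Definition inVE_G k (s : nat) (mu x : gitem k) : bool :=
  match x with
  | inl v => v \in ball s mu
  | inr e => is_gedge e && (e \subset ball s mu)
  end.

(* Main.v *)
Require Import Defs.
From mathcomp Require Import all_boot.
From mathcomp Require Import zify.
Set Implicit Arguments. Unset Strict Implicit.

Definition verts k (mu : gitem k) : {set gvtx k} :=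
  match mu with inl v => [set v] | inr e => e end.

Lemma ballP k s (mu : gitem k) u :
  reflect (exists2 v, v \in verts mu & u \in ballv s v) (u \in ball s mu).
Proof.
case: mu => [v|e] /=.
  apply: (iffP idP) => [H|[w]]; first by exists v; rewrite ?in_set1.
  by rewrite in_set1 => /eqP ->.
apply: (iffP bigcupP) => [[v Hv Hu]|[v Hv Hu]]; by exists v.
Qed.

Lemma inballv k s (u v : gvtx k) :
  (u \in ballv s v) = (ndist u.1 v.1 <= s) && (ndist u.2 v.2 <= s).
Proof. by rewrite inE. Qed.

Lemma ndistC a b : ndist a b = ndist b a.
Proof. by rewrite /ndist addnC. Qed.

Lemma adj2 k (a b x y : gvtx k) : gadj a b -> x \in [set a; b] -> y \in [set a; b] ->
  (ndist x.1 y.1 <= 1) && (ndist x.2 y.2 <= 1).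
Proof.
rewrite /gadj /ndist => /eqP H.
by rewrite !inE => /orP [] /eqP -> /orP [] /eqP ->; apply/andP; split; lia.
Qed.

Lemma divblock (a b d : nat) : 0 < d -> a %/ d = b %/ d -> a - b < d /\ b - a < d.
Proof.
move=> d0 E.
have Ha := divn_eq a d. have Hb := divn_eq b d.
have ra := ltn_pmod a d0. have rb := ltn_pmod b d0.
rewrite E in Ha. move: (b %/ d * d) Ha Hb => q Ha Hb. lia.
Qed.

Theorem lemma13 (r k : nat) :
  ~~ odd r -> 10 <= r -> 1 <= k ->
  forall Q : {set gitem k},
    (forall mu, mu \in Q -> inVE mu) ->
    (forall mu1 mu2, mu1 \in Q -> mu2 \in Q -> mu1 != mu2 ->
       ~~ inVE_G (2 * r + 1) mu2 mu1) ->
    forall mu : gitem k, inVE mu ->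
      #|[set mu1 in Q | inVE_G (3 * r + 1) mu1 mu]| <= 16.
Proof.
move=> _ _ _ Q HQ Hsep mu Hmu.
have [p Hp] : exists p, p \in verts mu.
  case: mu Hmu => [v|e] /=; first by exists v; rewrite in_set1.
  case/existsP => a /existsP [b /andP [_ /eqP ->]]; exists a; by rewrite !inE eqxx.
have Hball : forall mu1, inVE_G (3 * r + 1) mu1 mu -> p \in ball (3 * r + 1) mu1.
  move=> mu1; case: mu Hmu Hp => [v|e] /= _.
    by rewrite in_set1 => /eqP ->.
  by move=> Hp /andP [_ /subsetP]; apply.
set S := [set mu1 in Q | _].
pose c mu1 := odflt p [pick v in verts mu1 | p \in ballv (3 * r + 1) v].
have Hc : forall mu1, mu1 \in S -> c mu1 \in verts mu1 /\ p \in ballv (3 * r + 1) (c mu1).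
  move=> mu1; rewrite inE => /andP [_ /Hball /ballP [v Hv Hpv]].
  rewrite /c; case: pickP => [w /andP [H1 H2]|H] //=.
  by have := H v; rewrite Hv Hpv.
have Hsep2 : forall mu1 mu2, mu1 \in Q -> mu2 \in Q -> mu1 != mu2 ->
    forall c1 c2, c1 \in verts mu1 -> c2 \in verts mu2 ->
    ndist c1.1 c2.1 <= 2 * r -> ndist c1.2 c2.2 <= 2 * r -> False.
  move=> mu1 mu2 H1 H2 Hne c1 c2 Hc1 Hc2 D1 D2.
  have := Hsep _ _ H1 H2 Hne; have := HQ _ H1.
  case: mu1 {H1 Hne} Hc1 => [v|e] /=.
    rewrite in_set1 => /eqP Ec _; subst c1; apply/negP/negPn/ballP; exists c2 => //.
    by rewrite inballv; apply/andP; split; lia.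
  move=> Hc1 Hge; rewrite Hge /=; apply/negP/negPn/subsetP => x Hx.
  apply/ballP; exists c2 => //.
  case/existsP: Hge => a /existsP [b /andP [Hab /eqP Ee]].
  rewrite Ee in Hx Hc1.
  case/andP: (adj2 Hab Hx Hc1) => E1 E2.
  rewrite inballv; apply/andP; split; move: E1 E2 D1 D2; rewrite /ndist; lia.
pose g (x y : nat) := (x + (3 * r + 1) - y) %/ (2 * r + 1).
pose f mu1 := ((inord (g (c mu1).1 p.1) : 'I_3), (inord (g (c mu1).2 p.2) : 'I_3)).
have glt : forall x y, ndist x y <= 3 * r + 1 -> g x y < 3.
  move=> x y H; rewrite /g ltn_divLR; last by lia.
  move: H; rewrite /ndist; lia.
have ginj : forall x y z, ndist x z <= 3 * r + 1 -> ndist y z <= 3 * r + 1 ->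
    (inord (g x z) : 'I_3) = inord (g y z) -> ndist x y <= 2 * r.
  move=> x y z Hx Hy E.
  have := congr1 (@nat_of_ord 3) E; rewrite !inordK ?glt // => E2.
  have [] := divblock (_ : 0 < 2 * r + 1) E2; first by lia.
  move: Hx Hy; rewrite /ndist; lia.
have -> : #|S| = #|f @: S|.
  apply/esym/card_in_imset => mu1 mu2 H1 H2 E.
  apply/eqP/negPn/negP => Hne.
  have [C1 P1] := Hc _ H1; have [C2 P2] := Hc _ H2.
  move: P1 P2; rewrite !inballv => /andP [P11 P12] /andP [P21 P22].
  case: E => E1 E2.
  move: H1 H2; rewrite !inE => /andP [Q1 _] /andP [Q2 _].
  apply: (Hsep2 _ _ Q1 Q2 Hne _ _ C1 C2).
    by apply: ginj E1; rewrite ndistC.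
  by apply: ginj E2; rewrite ndistC.
apply: leq_trans (max_card _) _.
by rewrite card_prod !card_ord.
Qed.
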